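(* For all $w,k\in\mathbb{N}$ and $s\in\mathbb{N}_0$ there exists a graph $G$ with $\operatorname{tw}(G)\le k$ such that for every $(\le s)$-subdivision $G'$ of $G$, every graph $H$, and every $H$-partition of $G'$ with layered width at most $w$, the graph $H$ contains $K_{k+1}$ as a minor (and hence $\operatorname{tw}(H)\ge k$). *)

(* Defs.v *)
From mathcomp Require Import all_boot.
Set Implicit Arguments. Unset Strict Implicit. Unset Printing Implicit Defensive.

Definition simple_graph (T : finType) (e : rel T) : Prop :=
  symmetric e /\ irreflexive e.

Definition induced_connected (T : finType) (e : rel T) (S : {set T}) : Prop :=
  forall x y, x \in S -> y \in S ->
    connect [rel a b | [&& a \in S, b \in S & e a b]] x y.

(* No cycle (on >= 3 distinct vertices). *)
Definition acyclic (T : finType) (e : rel T) : Prop :=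
  forall (x : T) (p : seq T), uniq (x :: p) -> 2 <= size p -> path e x p ->
    ~~ e (last x p) x.

Definition is_tree (I : finType) (t : rel I) : Prop :=
  simple_graph t /\ (exists i : I, True) /\ (forall i j, connect t i j) /\ acyclic t.

Definition tree_decomposition (T : finType) (e : rel T)
    (I : finType) (t : rel I) (B : I -> {set T}) : Prop :=
  [/\ is_tree t,
      (forall v, exists i, v \in B i),
      (forall u v, e u v -> exists i, u \in B i /\ v \in B i) &
      (forall v, induced_connected t [set i | v \in B i])].

Definition tw_le (T : finType) (e : rel T) (k : nat) : Prop :=
  exists (I : finType) (t : rel I) (B : I -> {set T}),
    tree_decomposition e t B /\ forall i, #|B i| <= k.+1.

Definition has_K_minor (T : finType) (e : rel T) (n : nat) : Prop :=
  exists B : 'I_n -> {set T},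
    [/\ (forall i, B i != set0),
        (forall i, induced_connected e (B i)),
        (forall i j, i != j -> [disjoint B i & B j]) &
        (forall i j, i != j -> exists x y, [/\ x \in B i, y \in B j & e x y])].

(* (T', e') is a (<= s)-subdivision of (T, e): there are an injection phi of the
   original vertices and, for each edge uv, a sequence P u v of internal vertices
   (P v u its reverse) of length <= s, such that the vertex set of G' is the
   disjoint union of the image of phi and the internal vertices of the paths, and
   the edges of G' are exactly the consecutive pairs on the paths
   phi u, P u v, phi v. *)
Definition subdivision_le (s : nat) (T : finType) (e : rel T)
    (T' : finType) (e' : rel T') : Prop :=
  exists (phi : T -> T') (P : T -> T -> seq T'),
    [/\ injective phi,
        (forall u v, P v u = rev (P u v)),
        (forall u v, e u v ->
           [/\ size (P u v) <= s, uniq (P u v) &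
               all (fun x => x \notin codom phi) (P u v)]) &
        [/\
        (forall u v u' v' x, e u v -> e u' v' -> x \in P u v -> x \in P u' v' ->
           (u' = u /\ v' = v) \/ (u' = v /\ v' = u)),
        (forall x, x \in codom phi \/ exists u v, e u v /\ x \in P u v) &
        (forall x y, e' x y <->
           exists u v, e u v /\
             (x, y) \in zip (phi u :: P u v) (rcons (P u v) (phi v)))]].

(* H-partition of G given by the map f sending each vertex of G to (the index of)
   its part: parts are the fibres of f (possibly empty). *)
Definition H_partition (T : finType) (e : rel T) (U : finType) (eH : rel U)
    (f : T -> U) : Prop :=
  forall x y, e x y -> f x = f y \/ eH (f x) (f y).

(* A layering (V_0, V_1, ...) of G, given by the layer index L x of each vertex:
   every edge joins vertices in the same or consecutive layers. *)
Definition layering (T : finType) (e : rel T) (L : T -> nat) : Prop :=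
  forall x y, e x y -> (L x <= (L y).+1) && (L y <= (L x).+1).

Definition layered_width_le (T : finType) (e : rel T) (U : finType)
    (f : T -> U) (w : nat) : Prop :=
  exists L : T -> nat, layering e L /\
    forall (h : U) (i : nat), #|[set x | (f x == h) && (L x == i)]| <= w.

(* Main.v *)
Require Import Defs.
From mathcomp Require Import all_boot.
From mathcomp Require Import zify.
Set Implicit Arguments. Unset Strict Implicit. Unset Printing Implicit Defensive.

Lemma acyclic_rank (I : finType) (t : rel I) (r : I -> nat) :
  symmetric t -> (forall a b, t a b -> r a != r b) ->
  (forall a b c, t a b -> t a c -> r b < r a -> r c < r a -> b = c) -> acyclic t.
Proof.
move=> tsym tr tpar x p U Hs Hp; apply/negP => Hl.
have Hc : cycle t (x :: p) by rewrite /= rcons_path Hp Hl.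
have xin : x \in x :: p by rewrite mem_head.
case: (arg_maxnP r xin) => m min mmax.
case: (rot_to min) => i q Hr.
have := rot_cycle i t (x :: p); rewrite Hc Hr => Hc'.
have := rot_uniq i (x :: p); rewrite U Hr => U'.
have Hsz : size (rot i (x :: p)) = size (x :: p) by rewrite size_rot.
rewrite Hr /= in Hsz.
case: q Hr Hc' U' Hsz => [|a q'] Hr Hc' U' Hsz; first by move: Hs Hsz => /=; lia.
case: q' Hr Hc' U' Hsz => [|b0 q''] Hr Hc' U' Hsz; first by move: Hs Hsz => /=; lia.
move: Hc' => /= /andP[tma]; rewrite rcons_path => /andP[_ tlm]; move/andP: tlm => [_ tlm].
set b := last b0 q'' in tlm.
have ain : a \in x :: p by rewrite -(mem_rot i) Hr !inE eqxx orbT.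
have bin : b \in x :: p by rewrite -(mem_rot i) Hr; apply/orP; right; exact: (mem_last a (b0 :: q'')).
have ra : r a < r m by have h1 := mmax _ ain; have h2 := tr _ _ tma; rewrite /= in h1; lia.
have rb : r b < r m by have h1 := mmax _ bin; have h2 := tr _ _ tlm; rewrite /= in h1; lia.
have tmb : t m b by rewrite tsym.
have Hab := tpar m a b tma tmb ra rb.
move: U' => /= /andP[_ /andP[]]; rewrite inE negb_or => /andP[anb0 anq] _.
have : b \in b0 :: q'' by rewrite /b mem_last.
by rewrite -Hab inE (negbTE anb0) (negbTE anq).
Qed.
Section Tree.
Variables N k : nat.

Fixpoint allseq n : seq (seq 'I_N) :=
  if n is n'.+1 then [::] :: [seq i :: t | i <- enum 'I_N, t <- allseq n'] else [:: [::]].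

Lemma mem_allseq n x : (x \in allseq n) = (size x <= n).
Proof.
elim: n x => [|n IH] [|i t] //=.
rewrite in_cons /=; apply/allpairsP/idP.
  by case=> [[a b]] /= [_ Hb [_ ->]]; rewrite ltnS -IH.
by move=> H; exists (i, t); rewrite /= mem_enum IH -ltnS.
Qed.

Definition V := seq_sub (allseq k).
Lemma root_mem : ([::] : seq 'I_N) \in allseq k.
Proof. by rewrite mem_allseq. Qed.
Definition root : V := SeqSub root_mem.
Definition mk (y : seq 'I_N) : V := insubd root y.
Lemma val_mk y : size y <= k -> val (mk y) = y.
Proof. by move=> H; rewrite /mk insubdK // mem_allseq. Qed.
Lemma size_val (v : V) : size (val v) <= k.
Proof. by rewrite -mem_allseq; apply: (valP v). Qed.

Definition anc (x y : seq 'I_N) := (size x < size y) && (take (size x) y == x).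
Definition eT : rel V := fun x y => anc (val x) (val y) || anc (val y) (val x).
Definition par1 (x y : V) := (size (val y) == (size (val x)).+1) && (take (size (val x)) (val y) == val x).
Definition tT : rel V := fun x y => par1 x y || par1 y x.
Definition bag (i : V) : {set V} := [set v | take (size (val v)) (val i) == val v].

Lemma eT_simple : simple_graph eT.
Proof. split; first by move=> x y; rewrite /eT orbC. by move=> x; rewrite /eT /anc ltnn. Qed.

Lemma tT_sym : symmetric tT.
Proof. by move=> x y; rewrite /tT orbC. Qed.

Definition parent (x : V) : V := mk (take (size (val x)).-1 (val x)).

Lemma val_parent x : val (parent x) = take (size (val x)).-1 (val x).
Proof. rewrite /parent val_mk // size_take; have := size_val x; case: ifP => //; lia. Qed.

Lemma tT_parent x : 0 < size (val x) -> tT (parent x) x.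
Proof.
move=> H; apply/orP; left; rewrite /par1 val_parent size_takel; last by lia.
by rewrite eqxx andbT prednK.
Qed.

Lemma tT_par_eq a b : tT a b -> size (val b) < size (val a) -> b = parent a.
Proof.
case/orP => /andP[/eqP Hs /eqP Ht] Hlt; first by lia.
by apply: val_inj; rewrite val_parent Hs /= Ht.
Qed.

Lemma tT_size a b : tT a b -> size (val a) != size (val b).
Proof. by case/orP => /andP[/eqP -> _]; lia. Qed.

Lemma to_root i : connect tT i root.
Proof.
have sym := sym_connect_sym tT_sym.
move Hn : (size (val i)) => n; elim: n i Hn => [|n IH] i Hn.
  have -> : i = root by apply: val_inj; case: (val i) Hn.
  exact: connect0.
have Hp : size (val (parent i)) = n by rewrite val_parent size_takel ?leq_pred // Hn.
apply: connect_trans (IH _ Hp); apply: connect1; rewrite tT_sym; apply: tT_parent; by rewrite Hn.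
Qed.

Lemma tT_tree : is_tree tT.
Proof.
split; first split.
- exact: tT_sym.
- by move=> x; rewrite /tT /par1 orbb; case: eqP => //; lia.
split; first by exists root.
split.
  move=> i j; apply: connect_trans (to_root i) _.
  by rewrite (sym_connect_sym tT_sym); apply: to_root.
apply: (@acyclic_rank _ tT (fun v => size (val v))).
- exact: tT_sym.
- exact: tT_size.
- by move=> a b c Hab Hac Hb Hc; rewrite (tT_par_eq Hab Hb) (tT_par_eq Hac Hc).
Qed.

Lemma bag_conn v : induced_connected tT [set i | v \in bag i].
Proof.
have key : forall x, x \in [set i | v \in bag i] ->
  connect [rel a b | [&& a \in [set i | v \in bag i], b \in [set i | v \in bag i] & tT a b]] x v.
  move=> x; move Hn : (size (val x)) => n; elim: n x Hn => [|n IH] x Hn.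
    rewrite !inE => /eqP H.
    have Hx0 : val x = [::] by case: (val x) Hn.
    have -> : x = v by apply: val_inj; rewrite -H Hx0.
    exact: connect0.
  rewrite !inE => /eqP Hx.
  have Hsv : size (val v) <= size (val x).
    by rewrite -Hx size_take_min geq_minr.
  case: (ltnP (size (val v)) (size (val x))) => Hlt; last first.
    have -> : x = v by apply: val_inj; rewrite -Hx take_oversize.
    exact: connect0.
  have Hp : size (val (parent x)) = n by rewrite val_parent size_takel ?leq_pred // Hn.
  have Hpin : parent x \in [set i | v \in bag i].
    have Hle : size (val v) <= (size (val x)).-1.
      by rewrite -ltnS prednK // (leq_ltn_trans _ Hlt).
    by rewrite !inE val_parent take_takel // Hx.
  apply: connect_trans (IH _ Hp Hpin); apply: connect1; rewrite /= Hpin !inE Hx eqxx /=.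
  rewrite tT_sym; apply: tT_parent; exact: leq_ltn_trans (leq0n _) Hlt.
move=> x y Hx Hy; apply: connect_trans (key x Hx) _.
rewrite (sym_connect_sym _); first exact: key.
by move=> a b /=; rewrite tT_sym andbCA.
Qed.

Lemma card_bag i : #|bag i| <= k.+1.
Proof.
pose g (v : V) : 'I_k.+1 := inord (size (val v)).
rewrite -(card_in_imset (f := g)); first by apply: leq_trans (max_card _) _; rewrite card_ord.
move=> a b; rewrite !inE => /eqP Ha /eqP Hb Hg.
have : size (val a) = size (val b).
  by move: (congr1 (@nat_of_ord _) Hg); rewrite /g !inordK // ltnS size_val.
by move=> Hs; apply: val_inj; rewrite -Ha -Hb Hs.
Qed.

Lemma tw_eT : tw_le eT k.
Proof.
exists V, tT, bag; split; last exact: card_bag.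
split.
- exact: tT_tree.
- by move=> v; exists v; rewrite inE take_size.
- move=> u v /orP[] /andP[_ /eqP H].
    by exists v; rewrite !inE H take_size.
  by exists u; rewrite !inE H take_size.
- exact: bag_conn.
Qed.

End Tree.

Lemma card_bigcup_le (I : Type) (T : finType) (r : seq I) (A : I -> {set T}) m :
  (forall i, #|A i| <= m) -> #|\bigcup_(i <- r) A i| <= size r * m.
Proof.
move=> H; elim: r => [|x r IH]; first by rewrite big_nil cards0.
rewrite big_cons /= mulSn; apply: leq_trans (leq_card_setU _ _).1 _.
exact: leq_add.
Qed.

Lemma mem_bigcup_seq (I : eqType) (T : finType) (r : seq I) (A : I -> {set T}) i y :
  i \in r -> y \in A i -> y \in \bigcup_(j <- r) A j.
Proof.
elim: r => [|x r IH] //; rewrite inE big_cons in_setU => /orP[/eqP <- ->//|Hi Hy].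
by rewrite IH ?orbT.
Qed.

Lemma size_flatten_le (I : eqType) (T : Type) (r : seq I) (g : I -> seq T) m :
  (forall i, i \in r -> size (g i) <= m) -> size (flatten (map g r)) <= size r * m.
Proof.
elim: r => [|x r IH] H //=.
rewrite size_cat mulSn leq_add //; first by apply: H; rewrite mem_head.
by apply: IH => i Hi; apply: H; rewrite inE Hi orbT.
Qed.

Lemma path_zip (T : eqType) (r : rel T) x p z :
  (forall a b, (a, b) \in zip (x :: p) (rcons p z) -> r a b) -> path r x (rcons p z).
Proof.
elim: p x => [|y p IH] x H /=.
  by rewrite H // mem_head.
rewrite H ?mem_head //=; apply: IH => a b Hab; apply: H; by rewrite /= inE Hab orbT.
Qed.

Lemma zip_last (T : eqType) x p (z : T) : (last x p, z) \in zip (x :: p) (rcons p z).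
Proof.
elim: p x => [|y p IH] x /=; first by rewrite mem_head.
by rewrite inE IH orbT.
Qed.

Section Greedy.
Variables N k s w : nat.
Local Notation V := (V N k).
Local Notation mk := (@mk N k).
Variables (T' : finType) (e' : rel T') (phi : V -> T') (P : V -> V -> seq T').
Hypothesis phi_inj : injective phi.
Hypothesis HP : forall u v, eT u v ->
  [/\ size (P u v) <= s, uniq (P u v) & all (fun x => x \notin codom phi) (P u v)].
Hypothesis Pdisj : forall u v u' v' x, eT u v -> eT u' v' -> x \in P u v -> x \in P u' v' ->
           (u' = u /\ v' = v) \/ (u' = v /\ v' = u).
Hypothesis Pe' : forall x y, e' x y <->
           exists u v, eT u v /\ (x, y) \in zip (phi u :: P u v) (rcons (P u v) (phi v)).
Variables (U : finType) (eH : rel U) (f : T' -> U) (L : T' -> nat).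
Hypothesis eHsym : symmetric eH.
Hypothesis Hpart : H_partition e' eH f.
Hypothesis Hlay : layering e' L.
Hypothesis Hwid : forall h i, #|[set x | (f x == h) && (L x == i)]| <= w.
Hypothesis HN : (k.+1 * (1 + k * s)) * ((2 * (2 * s + 1)).+1 * w) < N.

Lemma path_uv u v : eT u v -> path e' (phi u) (rcons (P u v) (phi v)).
Proof. move=> Huv; apply: path_zip => a b Hab; apply/Pe'; by exists u, v. Qed.

Lemma path_uv' u v : eT u v -> path e' (phi u) (P u v).
Proof. by move=> Huv; have := path_uv Huv; rewrite rcons_path => /andP[]. Qed.

Lemma path_layer x p : path e' x p -> forall y, y \in x :: p ->
  (L y <= L x + size p) && (L x <= L y + size p).
Proof.
elim: p x => [|z p IH] x /=.
  by move=> _ y; rewrite inE => /eqP ->; rewrite addn0 leqnn.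
move=> /andP[Hxz Hp] y; rewrite inE => /orP[/eqP ->|Hy].
  by rewrite leq_addr.
have := Hlay Hxz; have := IH z Hp y Hy; lia.
Qed.

Lemma path_conn (S : {set U}) x p : path e' x p -> (forall y, y \in x :: p -> f y \in S) ->
  forall y, y \in x :: p -> connect [rel a b | [&& a \in S, b \in S & eH a b]] (f x) (f y).
Proof.
elim: p x => [|z p IH] x /=.
  by move=> _ _ y; rewrite inE => /eqP ->; exact: connect0.
move=> /andP[Hxz Hp] HS y; rewrite inE => /orP[/eqP ->|Hy]; first exact: connect0.
have HS' : forall y, y \in z :: p -> f y \in S by move=> y0 Hy0; apply: HS; rewrite inE Hy0 orbT.
have IH' := IH z Hp HS' y Hy.
apply: connect_trans IH'.
case: (Hpart Hxz) => [->|He]; first exact: connect0.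
apply: connect1; rewrite /= He !HS ?mem_head //.
by rewrite inE mem_head orbT.
Qed.

Definition vt (c : seq 'I_N) i := mk (take i c).
Definition X c i : seq T' := phi (vt c i) :: flatten [seq P (vt c i) (vt c i') | i' <- iota 0 i].

Lemma val_vt c i : size c <= k -> val (vt c i) = take i c.
Proof. by move=> Hc; rewrite /vt val_mk // size_take_min geq_min Hc orbT. Qed.

Lemma size_vt c i : size c <= k -> i <= size c -> size (val (vt c i)) = i.
Proof. by move=> Hc Hi; rewrite val_vt // size_takel. Qed.

Lemma e_vt c i i' : size c <= k -> i' < i -> i <= size c -> eT (vt c i) (vt c i').
Proof.
move=> Hc Hii Hi; apply/orP; right; rewrite /anc !val_vt // !size_takel //.
  by rewrite Hii take_takel ?eqxx // ltnW.
by apply: leq_trans Hi; apply: ltnW.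
Qed.

Lemma mem_X c i y : y \in X c i ->
  y = phi (vt c i) \/ exists2 i', i' < i & y \in P (vt c i) (vt c i').
Proof.
rewrite inE => /orP[/eqP ->|]; first by left.
move/flatten_mapP => [i' Hi' Hy]; right; exists i' => //.
by move: Hi'; rewrite mem_iota.
Qed.

Lemma P_sub_X c i i' y : i' < i -> y \in P (vt c i) (vt c i') -> y \in X c i.
Proof.
move=> Hi Hy; rewrite inE; apply/orP; right; apply/flatten_mapP.
by exists i' => //; rewrite mem_iota.
Qed.

Lemma X_conn c i : size c <= k -> i <= size c -> forall y, y \in X c i ->
  connect [rel a b | [&& a \in [set f z | z in X c i], b \in [set f z | z in X c i] & eH a b]]
    (f (phi (vt c i))) (f y).
Proof.
move=> Hc Hi y /mem_X [->|[i' Hi' Hy]]; first exact: connect0.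
apply: (path_conn (path_uv' (e_vt Hc Hi' Hi))); last by rewrite inE Hy orbT.
move=> z; rewrite inE => /orP[/eqP ->|Hz]; apply: imset_f; first by rewrite mem_head.
exact: P_sub_X Hz.
Qed.

Lemma size_X c i : size c <= k -> i <= size c -> size (X c i) <= 1 + k * s.
Proof.
move=> Hc Hi; rewrite /= add1n ltnS; apply: leq_trans (size_flatten_le (m := s) _) _.
  move=> i'; rewrite mem_iota /= => Hi'; by case: (HP (e_vt Hc Hi' Hi)).
by rewrite size_iota leq_mul2r (leq_trans Hi Hc) orbT.
Qed.

Definition Good c := forall i i', i < i' -> i' <= size c -> forall y1 y2,
  y1 \in X c i -> y2 \in X c i' -> f y1 != f y2.

Lemma vt_rcons c a i : i <= size c -> vt (rcons c a) i = vt c i.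
Proof. by move=> Hi; rewrite /vt -cats1 takel_cat. Qed.

Lemma X_rcons c a i : i <= size c -> X (rcons c a) i = X c i.
Proof.
move=> Hi; rewrite /X vt_rcons //; congr (_ :: flatten _).
apply/eq_in_map => i'; rewrite mem_iota /= => Hi'.
by rewrite vt_rcons // (leq_trans (ltnW Hi')).
Qed.

Lemma step c : size c < k -> Good c -> exists a, Good (rcons c a).
Proof.
move=> Hck HG; set j := size c.
have Hc : size c <= k by apply: ltnW.
have Hc' : forall a, size (rcons c a) <= k by move=> a; rewrite size_rcons.
set Z := flatten [seq X c i | i <- iota 0 j.+1].
set F : {set U} := [set f y | y in Z].
set cand := fun a => X (rcons c a) j.+1.
have XZ : forall i y, i <= j -> y \in X c i -> f y \in F.
  move=> i y Hi Hy; apply: imset_f; apply/flatten_mapP; exists i => //.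
  by rewrite mem_iota.
case: (pickP (fun a => ~~ has (fun y => f y \in F) (cand a))) => [a Ha | Hall].
  exists a => i i' Hii' Hi' y1 y2 Hy1 Hy2.
  have Hij : i <= j by rewrite -ltnS (leq_trans Hii') // -(size_rcons c a).
  rewrite X_rcons // in Hy1.
  case: (ltnP i' j.+1) => Hi'j.
    rewrite X_rcons // in Hy2; exact: HG Hii' Hi'j y1 y2 Hy1 Hy2.
  have Ei : i' = j.+1 by apply/eqP; rewrite eqn_leq Hi'j -(size_rcons c a) Hi'.
  rewrite Ei in Hy2.
  apply/eqP => E; move/hasPn: Ha => /(_ y2 Hy2); rewrite -E.
  by rewrite (XZ i y1 Hij Hy1).
exfalso.
set ell := L (phi (vt c j)).
set D := 2 * s + 1.
have cand_win : forall a y, y \in cand a -> (L y <= ell + D) && (ell <= L y + D).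
  move=> a y Hy.
  have Hj1 : j.+1 <= size (rcons c a) by rewrite size_rcons.
  have Heu := e_vt (Hc' a) (ltnSn j) Hj1.
  have H1 := path_layer (path_uv Heu).
  have Hm : phi (vt (rcons c a) j) \in phi (vt (rcons c a) j.+1) ::
       rcons (P (vt (rcons c a) j.+1) (vt (rcons c a) j)) (phi (vt (rcons c a) j)).
    by rewrite inE mem_rcons mem_head orbT.
  have Eell : L (phi (vt (rcons c a) j)) = ell by rewrite vt_rcons.
  move: (H1 _ Hm); rewrite size_rcons Eell.
  have [Hs1 _ _] := HP Heu.
  case/mem_X: Hy => [->|[i' Hi' Hy']].
    rewrite /D; lia.
  have Hei := e_vt (Hc' a) Hi' Hj1.
  have [Hs2 _ _] := HP Hei.
  have := path_layer (path_uv' Hei) (y := y); rewrite inE Hy' orbT => /(_ isT).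
  rewrite /D; lia.
have cand_disj : forall a b y, y \in cand a -> y \in cand b -> a = b.
  move=> a b y Ha Hb.
  have Hja : j.+1 <= size (rcons c a) by rewrite size_rcons.
  have Hjb : j.+1 <= size (rcons c b) by rewrite size_rcons.
  have vta : val (vt (rcons c a) j.+1) = rcons c a.
    by rewrite val_vt // take_oversize // size_rcons.
  have vtb : val (vt (rcons c b) j.+1) = rcons c b.
    by rewrite val_vt // take_oversize // size_rcons.
  have notphi : forall d i' y, i' < j.+1 -> y \in P (vt (rcons c d) j.+1) (vt (rcons c d) i') ->
      y \notin codom phi.
    move=> d i' z Hi' Hz; have Hd : j.+1 <= size (rcons c d) by rewrite size_rcons.
    have [_ _ /allP Hall'] := HP (e_vt (Hc' d) Hi' Hd); exact: Hall' z Hz.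
  case/mem_X: Ha => [Ea|[ia Hia Hya]]; case/mem_X: Hb => [Eb|[ib Hib Hyb]].
  - have := congr1 val (phi_inj (etrans (esym Ea) Eb)); rewrite vta vtb.
    by move/rcons_inj => [].
  - by move: (notphi _ _ _ Hib Hyb); rewrite Ea codom_f.
  - by move: (notphi _ _ _ Hia Hya); rewrite Eb codom_f.
  - have := Pdisj (e_vt (Hc' a) Hia Hja) (e_vt (Hc' b) Hib Hjb) Hya Hyb.
    case=> [[Eu _]|[Eu _]].
      by move: (congr1 val Eu); rewrite vta vtb; by move/rcons_inj => [].
    move: (congr1 (fun v => size (val v)) Eu) => /=.
    rewrite vtb val_vt ?size_rcons // size_takel ?size_rcons //; first by lia.
    by apply: leq_trans (ltnW Hia) _.
pose x0 := phi (vt c j).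
pose wit a := nth x0 (cand a) (find (fun y => f y \in F) (cand a)).
have Hhas : forall a, has (fun y => f y \in F) (cand a).
  by move=> a; move: (Hall a); rewrite /= => /negbFE.
have wit_in : forall a, wit a \in cand a by move=> a; apply: mem_nth; rewrite -has_find; exact: Hhas.
have wit_F : forall a, f (wit a) \in F by move=> a; exact: (nth_find x0 (Hhas a)).
have wit_inj : injective wit.
  move=> a b E; apply: (cand_disj a b (wit a)); first exact: wit_in.
  by rewrite E; exact: wit_in.
set Y := [set y | (f y \in F) && (L y <= ell + D) && (ell <= L y + D)].
have HY : wit @: setT \subset Y.
  apply/subsetP => y /imsetP [a _ ->]; rewrite inE wit_F /=; exact: cand_win (wit_in a).
have H1 : N <= #|Y|.
  by have := subset_leq_card HY; rewrite card_imset // cardsT card_ord.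
have HY2 : Y \subset \bigcup_(h <- enum F) \bigcup_(t <- iota 0 (2 * D).+1)
       [set x | (f x == h) && (L x == ell + t - D)].
  apply/subsetP => y; rewrite inE => /andP[/andP[HF Hu] Hl].
  apply: (mem_bigcup_seq (i := f y)); first by rewrite mem_enum HF.
  apply: (mem_bigcup_seq (i := L y + D - ell)).
    by rewrite mem_iota /=; lia.
  rewrite inE eqxx /=; apply/eqP; lia.
have H2 : #|Y| <= #|F| * ((2 * D).+1 * w).
  apply: leq_trans (subset_leq_card HY2) _.
  apply: leq_trans (card_bigcup_le (enum F) (m := (2 * D).+1 * w) _) _; last by rewrite -cardE.
  move=> h; apply: leq_trans (card_bigcup_le (iota 0 (2 * D).+1) (m := w) _) _; last by rewrite size_iota.
  by move=> t; apply: Hwid.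
have H3 : #|F| <= k.+1 * (1 + k * s).
  apply: leq_trans (leq_imset_card _ _) _; apply: leq_trans (card_size _) _.
  apply: leq_trans (size_flatten_le (m := 1 + k * s) _) _.
    move=> i; rewrite mem_iota /= ltnS => Hi; exact: size_X.
  by rewrite size_iota leq_mul2r ltnS Hc orbT.
have := leq_trans H1 (leq_trans H2 (leq_mul H3 (leqnn _))).
by rewrite leqNgt /D HN.
Qed.

Lemma main j : j <= k -> exists c, size c = j /\ Good c.
Proof.
elim: j => [|j IH] Hj.
  exists [::]; split => // i i' Hii' Hi'; by move: (leq_trans Hii' Hi').
have [c [Hs HG]] := IH (ltnW Hj).
have Hlt : size c < k by rewrite Hs.
have [a Ha] := step Hlt HG.
by exists (rcons c a); rewrite size_rcons Hs.
Qed.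

Lemma final_minor : has_K_minor eH k.+1.
Proof.
have [c [Hs HG]] := main (leqnn k).
have Hc : size c <= k by rewrite Hs.
have Hi : forall i : 'I_k.+1, i <= size c by move=> i; rewrite Hs -ltnS.
have adj : forall i j : 'I_k.+1, i < j -> exists x y,
    [/\ x \in [set f z | z in X c i], y \in [set f z | z in X c j] & eH x y].
  move=> i j Hij.
  have Hev := e_vt Hc Hij (Hi j).
  have := path_uv Hev; rewrite rcons_path => /andP[_ He].
  set l := last _ _ in He.
  have Hl : l \in X c j.
    have := mem_last (phi (vt c j)) (P (vt c j) (vt c i)); rewrite -/l inE.
    case/orP => [/eqP ->|Hl]; first by rewrite mem_head.
    exact: P_sub_X Hl.
  have Hp : phi (vt c i) \in X c i by rewrite mem_head.
  exists (f (phi (vt c i))), (f l); split; try exact: imset_f.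
  case: (Hpart He) => E; last by rewrite eHsym.
  by move: (HG i j Hij (Hi j) _ _ Hp Hl); rewrite E eqxx.
exists (fun i => [set f z | z in X c i]); split.
- move=> i; apply/set0Pn; exists (f (phi (vt c i))); apply: imset_f; exact: mem_head.
- move=> i x y /imsetP[y1 H1 ->] /imsetP[y2 H2 ->].
  have sym : connect_sym [rel a b | [&& a \in [set f z | z in X c i],
                   b \in [set f z | z in X c i] & eH a b]].
    by apply: sym_connect_sym => a b /=; rewrite eHsym andbCA.
  apply: connect_trans (X_conn Hc (Hi i) H2); rewrite sym; exact: X_conn.
- move=> i j Hij.
  have disj : forall i j : 'I_k.+1, i < j ->
      [disjoint [set f z | z in X c i] & [set f z | z in X c j]].
    move=> i0 j0 Hij0; rewrite -setI_eq0; apply/eqP/setP => h; rewrite !inE.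
    apply/negP => /andP[/imsetP[y1 H1 ->] /imsetP[y2 H2 E]].
    by move: (HG i0 j0 Hij0 (Hi j0) _ _ H1 H2); rewrite E eqxx.
  case: (ltngtP i j) => H; first exact: disj.
    by rewrite disjoint_sym; exact: disj.
  by move: Hij; rewrite (val_inj H) eqxx.
- move=> i j Hij; case: (ltngtP i j) => H; first exact: adj.
    have [x [y [Hx Hy He]]] := adj j i H; exists y, x; split => //; by rewrite eHsym.
  by move: Hij; rewrite (val_inj H) eqxx.
Qed.

End Greedy.

Theorem lemma3p6 (w k s : nat) (hw : 1 <= w) (hk : 1 <= k) :
  exists (T : finType) (e : rel T),
    [/\ simple_graph e, tw_le e k &
      forall (T' : finType) (e' : rel T'), simple_graph e' -> subdivision_le s e e' ->
      forall (U : finType) (eH : rel U), simple_graph eH ->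
      forall f : T' -> U, H_partition e' eH f -> layered_width_le e' f w ->
        has_K_minor eH k.+1].
Proof.
pose N := (k.+1 * (1 + k * s)) * ((2 * (2 * s + 1)).+1 * w) + 1.
have HN : (k.+1 * (1 + k * s)) * ((2 * (2 * s + 1)).+1 * w) < N by rewrite /N [X in _ < X]addn1.
exists (V N k), (@eT N k); split.
- exact: eT_simple.
- exact: tw_eT.
move=> T' e' _ [phi [P [phi_inj _ HP [Pdisj _ Pe']]]] U eH [eHsym _] f Hpart.
case=> L [Hlay Hwid].
exact: (final_minor phi_inj HP Pdisj Pe' eHsym Hpart Hlay Hwid HN).
Qed.
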